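(* In every bigroupoid $\mathcal B$, every formal diagram commutes; equivalently, any two canonical 2-cells (images under $J_b$ of 2-cells of $\mathcal F_b\mathcal B$) with the same source and target that arise as images of parallel 2-cells of $\mathcal F_b\mathcal B$ are equal, since every diagram of 2-cells in $\mathcal F_b\mathcal B$ commutes.
   Context: A graph consists of a set of nodes and sets of edges between pairs of nodes. A bigroupoid consists of a set of 0-cells, hom-groupoids $\mathcal B(A,B)$ (objects: 1-cells; arrows: 2-cells), composition functors $*$, identity 1-cells $1_A$, inversion functors $(-)^*$ and natural isomorphisms $\mathbf a:(h*g)*f\Rightarrow h*(g*f)$, $\mathbf l:1*f\Rightarrow f$, $\mathbf r:f*1\Rightarrow f$, $\mathbf e:f^**f\Rightarrow 1$, $\mathbf i:1\Rightarrow f*f^*$ satisfying the pentagon, $(\mathrm{id}*\mathbf l)\circ\mathbf a=\mathbf r*\mathrm{id}$, and $\mathbf r_f\circ(\mathrm{id}*\mathbf e_f)\circ\mathbf a\circ(\mathbf i_f*\mathrm{id})=\mathbf l_f$. A strict morphism preserves all structure on the nose. Every bigroupoid has an underlying graph (0-cells and 1-cells). For a graph $\mathcal G$, the free bigroupoid $\mathcal F_b\mathcal G$ comes with a graph morphism $I_b:\mathcal G\to\mathcal F_b\mathcal G$ such that for every bigroupoid $\mathcal B$ and graph morphism $F:\mathcal G\to\mathcal B$ there is a unique strict morphism $\widetilde F$ with $\widetilde FI_b=F$. For a bigroupoid $\mathcal B$, let $\mathcal F_b\mathcal B$ be the free bigroupoid on its underlying graph and $J_b:\mathcal F_b\mathcal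 B\to\mathcal B$ the unique strict morphism extending the identity of the underlying graph. A diagram of 2-cells in $\mathcal B$ is a formal diagram if it is the image under $J_b$ of a diagram of 2-cells in $\mathcal F_b\mathcal B$; a single 2-cell arising this way is called canonical. *)

(* Defs.v *)
Set Implicit Arguments.
Unset Strict Implicit.

Record BigSig := {
  Ob   : Type;
  Hom  : Ob -> Ob -> Type;
  Cell : forall A B, Hom A B -> Hom A B -> Type;
  vid   : forall A B (f : Hom A B), Cell f f;
  vcomp : forall A B (f g h : Hom A B), Cell g h -> Cell f g -> Cell f h;
  vinv  : forall A B (f g : Hom A B), Cell f g -> Cell g f;
  (* composition functor  * : B(B,C) x B(A,B) -> B(A,C);  h*g means "g then h" *)
  comp  : forall A B C, Hom B C -> Hom A B -> Hom A C;
  hcomp : forall A B C (g g' : Hom B C) (f f' : Hom A B),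
            Cell g g' -> Cell f f' -> Cell (comp g f) (comp g' f');
  one   : forall A, Hom A A;
  inv1  : forall A B, Hom A B -> Hom B A;
  inv2  : forall A B (f f' : Hom A B), Cell f f' -> Cell (inv1 f) (inv1 f');
  assoc : forall A B C D (h : Hom C D) (g : Hom B C) (f : Hom A B),
            Cell (comp (comp h g) f) (comp h (comp g f));
  lun   : forall A B (f : Hom A B), Cell (comp (one B) f) f;
  run   : forall A B (f : Hom A B), Cell (comp f (one A)) f;
  ev    : forall A B (f : Hom A B), Cell (comp (inv1 f) f) (one A);
  coev  : forall A B (f : Hom A B), Cell (one B) (comp f (inv1 f))
}.

Arguments Hom : clear implicits.
Arguments Cell {S A B} f g : rename.
Arguments vid {S A B} f : rename.
Arguments vcomp {S A B f g h} _ _ : rename.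
Arguments vinv {S A B f g} _ : rename.
Arguments comp {S A B C} _ _ : rename.
Arguments hcomp {S A B C g g' f f'} _ _ : rename.
Arguments one {S} A : rename.
Arguments inv1 {S A B} _ : rename.
Arguments inv2 {S A B f f'} _ : rename.
Arguments assoc {S A B C D} h g f : rename.
Arguments lun {S A B} f : rename.
Arguments run {S A B} f : rename.
Arguments ev {S A B} f : rename.
Arguments coev {S A B} f : rename.

Definition is_bigroupoid (S : BigSig) : Prop :=
  (forall A B (f g h k : Hom S A B) (x : Cell f g) (y : Cell g h) (z : Cell h k),
      vcomp z (vcomp y x) = vcomp (vcomp z y) x) /\
  (forall A B (f g : Hom S A B) (x : Cell f g), vcomp (vid g) x = x) /\
  (forall A B (f g : Hom S A B) (x : Cell f g), vcomp x (vid f) = x) /\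
  (forall A B (f g : Hom S A B) (x : Cell f g), vcomp (vinv x) x = vid f) /\
  (forall A B (f g : Hom S A B) (x : Cell f g), vcomp x (vinv x) = vid g) /\
  (forall A B C (g : Hom S B C) (f : Hom S A B),
      hcomp (vid g) (vid f) = vid (comp g f)) /\
  (forall A B C (g1 g2 g3 : Hom S B C) (f1 f2 f3 : Hom S A B)
          (y : Cell g1 g2) (y' : Cell g2 g3) (x : Cell f1 f2) (x' : Cell f2 f3),
      hcomp (vcomp y' y) (vcomp x' x) = vcomp (hcomp y' x') (hcomp y x)) /\
  (forall A B (f : Hom S A B), inv2 (vid f) = vid (inv1 f)) /\
  (forall A B (f1 f2 f3 : Hom S A B) (x : Cell f1 f2) (x' : Cell f2 f3),
      inv2 (vcomp x' x) = vcomp (inv2 x') (inv2 x)) /\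
  (* naturality of a, l, r, e, i  (they are isomorphisms since B(A,B) are groupoids) *)
  (forall A B C D (h h' : Hom S C D) (g g' : Hom S B C) (f f' : Hom S A B)
          (z : Cell h h') (y : Cell g g') (x : Cell f f'),
      vcomp (assoc h' g' f') (hcomp (hcomp z y) x)
      = vcomp (hcomp z (hcomp y x)) (assoc h g f)) /\
  (forall A B (f f' : Hom S A B) (x : Cell f f'),
      vcomp (lun f') (hcomp (vid (one B)) x) = vcomp x (lun f)) /\
  (forall A B (f f' : Hom S A B) (x : Cell f f'),
      vcomp (run f') (hcomp x (vid (one A))) = vcomp x (run f)) /\
  (forall A B (f f' : Hom S A B) (x : Cell f f'),
      vcomp (ev f') (hcomp (inv2 x) x) = vcomp (vid (one A)) (ev f)) /\
  (forall A B (f f' : Hom S A B) (x : Cell f f'),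
      vcomp (coev f') (vid (one B)) = vcomp (hcomp x (inv2 x)) (coev f)) /\
  (forall A B C D E (k : Hom S D E) (h : Hom S C D) (g : Hom S B C) (f : Hom S A B),
      vcomp (assoc k h (comp g f)) (assoc (comp k h) g f)
      = vcomp (hcomp (vid k) (assoc h g f))
              (vcomp (assoc k (comp h g) f) (hcomp (assoc k h g) (vid f)))) /\
  (forall A B C (g : Hom S B C) (f : Hom S A B),
      vcomp (hcomp (vid g) (lun f)) (assoc g (one B) f)
      = hcomp (run g) (vid f)) /\
  (forall A B (f : Hom S A B),
      vcomp (run f)
        (vcomp (hcomp (vid f) (ev f))
           (vcomp (assoc f (inv1 f) f) (hcomp (coev f) (vid f))))
      = lun f).

(* The free bigroupoid on the underlying graph of S, presented by     *)
(* terms: 1-cells of F_b are the formal words below (no relations at  *)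
(* the level of 1-cells); 2-cells of F_b are the formal 2-cell terms  *)
(* below modulo the bigroupoid axioms.                                *)

Section Free.
Variable S : BigSig.

Inductive FHom : Ob S -> Ob S -> Type :=
  | Fgen  : forall A B, Hom S A B -> FHom A B
  | Fone  : forall A, FHom A A
  | Fcomp : forall A B C, FHom B C -> FHom A B -> FHom A C
  | Finv  : forall A B, FHom A B -> FHom B A.

Inductive FCell : forall A B, FHom A B -> FHom A B -> Type :=
  | Cid    : forall A B (f : FHom A B), FCell f f
  | Cvcomp : forall A B (f g h : FHom A B), FCell g h -> FCell f g -> FCell f h
  | Cvinv  : forall A B (f g : FHom A B), FCell f g -> FCell g f
  | Chcomp : forall A B C (g g' : FHom B C) (f f' : FHom A B),
               FCell g g' -> FCell f f' -> FCell (Fcomp g f) (Fcomp g' f')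
  | Cinv2  : forall A B (f f' : FHom A B), FCell f f' -> FCell (Finv f) (Finv f')
  | Cassoc : forall A B C D (h : FHom C D) (g : FHom B C) (f : FHom A B),
               FCell (Fcomp (Fcomp h g) f) (Fcomp h (Fcomp g f))
  | Clun   : forall A B (f : FHom A B), FCell (Fcomp (Fone B) f) f
  | Crun   : forall A B (f : FHom A B), FCell (Fcomp f (Fone A)) f
  | Cev    : forall A B (f : FHom A B), FCell (Fcomp (Finv f) f) (Fone A)
  | Ccoev  : forall A B (f : FHom A B), FCell (Fone B) (Fcomp f (Finv f)).

Fixpoint J1 A B (f : FHom A B) : Hom S A B :=
  match f in FHom A B return Hom S A B with
  | Fgen x => x
  | Fone A => one A
  | Fcomp g f => comp (J1 g) (J1 f)
  | Finv f => inv1 (J1 f)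
  end.

(* J_b on 2-cells (on representatives; it respects the bigroupoid axioms
   whenever S is a bigroupoid, hence induces the strict morphism J_b) *)
Fixpoint J2 A B (f g : FHom A B) (x : FCell f g) : Cell (J1 f) (J1 g) :=
  match x in @FCell A B f g return Cell (J1 f) (J1 g) with
  | Cid f => vid (J1 f)
  | Cvcomp y x => vcomp (J2 y) (J2 x)
  | Cvinv x => vinv (J2 x)
  | Chcomp y x => hcomp (J2 y) (J2 x)
  | Cinv2 x => inv2 (J2 x)
  | Cassoc h g f => assoc (J1 h) (J1 g) (J1 f)
  | Clun f => lun (J1 f)
  | Crun f => run (J1 f)
  | Cev f => ev (J1 f)
  | Ccoev f => coev (J1 f)
  end.

End Free.

Arguments Fgen {S A B} _.
Arguments Fone {S} A.
Arguments Fcomp {S A B C} _ _.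
Arguments Finv {S A B} _.
Arguments FHom : clear implicits.
Arguments FCell {S A B} _ _.
Arguments J1 {S A B} _.
Arguments J2 {S A B f g} _.

(* Main.v *)
Require Import Defs.
From Stdlib Require Import ClassicalEpsilon ProofIrrelevance Eqdep.
Set Implicit Arguments.
Unset Strict Implicit.

Section Coh.
Variable S : BigSig.
Hypothesis HS : is_bigroupoid S.

Ltac dHS := destruct HS as (H1&H2&H3&H4&H5&H6&H7&H8&H9&H10&H11&H12&H13&H14&H15&H16&H17).

Lemma vA A B (f g h k : Hom S A B) (x : Cell f g) (y : Cell g h) (z : Cell h k) :
  vcomp z (vcomp y x) = vcomp (vcomp z y) x.
Proof. dHS; apply H1. Qed.
Lemma vidl A B (f g : Hom S A B) (x : Cell f g) : vcomp (vid g) x = x.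
Proof. dHS; apply H2. Qed.
Lemma vidr A B (f g : Hom S A B) (x : Cell f g) : vcomp x (vid f) = x.
Proof. dHS; apply H3. Qed.
Lemma vinvl A B (f g : Hom S A B) (x : Cell f g) : vcomp (vinv x) x = vid f.
Proof. dHS; apply H4. Qed.
Lemma vinvr A B (f g : Hom S A B) (x : Cell f g) : vcomp x (vinv x) = vid g.
Proof. dHS; apply H5. Qed.
Lemma hid A B C (g : Hom S B C) (f : Hom S A B) : hcomp (vid g) (vid f) = vid (comp g f).
Proof. dHS; apply H6. Qed.
Lemma hv A B C (g1 g2 g3 : Hom S B C) (f1 f2 f3 : Hom S A B)
          (y : Cell g1 g2) (y' : Cell g2 g3) (x : Cell f1 f2) (x' : Cell f2 f3) :
      hcomp (vcomp y' y) (vcomp x' x) = vcomp (hcomp y' x') (hcomp y x).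
Proof. dHS; apply H7. Qed.
Lemma anat A B C D (h h' : Hom S C D) (g g' : Hom S B C) (f f' : Hom S A B)
          (z : Cell h h') (y : Cell g g') (x : Cell f f') :
      vcomp (assoc h' g' f') (hcomp (hcomp z y) x)
      = vcomp (hcomp z (hcomp y x)) (assoc h g f).
Proof. dHS; apply H10. Qed.
Lemma lnat A B (f f' : Hom S A B) (x : Cell f f') :
      vcomp (lun f') (hcomp (vid (one B)) x) = vcomp x (lun f).
Proof. dHS; apply H11. Qed.
Lemma evnat A B (f f' : Hom S A B) (x : Cell f f') :
      vcomp (ev f') (hcomp (inv2 x) x) = vcomp (vid (one A)) (ev f).
Proof. dHS; apply H13. Qed.
Lemma pent A B C D E (k : Hom S D E) (h : Hom S C D) (g : Hom S B C) (f : Hom S A B) :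
      vcomp (assoc k h (comp g f)) (assoc (comp k h) g f)
      = vcomp (hcomp (vid k) (assoc h g f))
              (vcomp (assoc k (comp h g) f) (hcomp (assoc k h g) (vid f))).
Proof. dHS; apply H15. Qed.
Lemma tri A B C (g : Hom S B C) (f : Hom S A B) :
      vcomp (hcomp (vid g) (lun f)) (assoc g (one B) f)
      = hcomp (run g) (vid f).
Proof. dHS; apply H16. Qed.
Lemma zz A B (f : Hom S A B) :
      vcomp (run f)
        (vcomp (hcomp (vid f) (ev f))
           (vcomp (assoc f (inv1 f) f) (hcomp (coev f) (vid f))))
      = lun f.
Proof. dHS; apply H17. Qed.

Lemma cancel_r A B (f g h : Hom S A B) (x : Cell f g) (u v : Cell g h) :
  vcomp u x = vcomp v x -> u = v.
Proof. intro E. rewrite <- (vidr u), <- (vidr v), <- (vinvr x), !vA, E. reflexivity. Qed.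
Lemma cancel_l A B (f g h : Hom S A B) (x : Cell g h) (u v : Cell f g) :
  vcomp x u = vcomp x v -> u = v.
Proof. intro E. rewrite <- (vidl u), <- (vidl v), <- (vinvl x), <- !vA, E. reflexivity. Qed.
Lemma vinv_uniq A B (f g : Hom S A B) (x : Cell f g) (y : Cell g f) :
  vcomp y x = vid f -> y = vinv x.
Proof. intro E. apply (cancel_r (x:=x)). rewrite E, vinvl. reflexivity. Qed.
Lemma vinv_v A B (f g h : Hom S A B) (x : Cell f g) (y : Cell g h) :
  vinv (vcomp y x) = vcomp (vinv x) (vinv y).
Proof. symmetry. apply vinv_uniq. rewrite <- vA, (vA x y (vinv y)), vinvl, vidl, vinvl. reflexivity. Qed.
Lemma vinv_vid A B (f : Hom S A B) : vinv (vid f) = vid f.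
Proof. symmetry. apply vinv_uniq. apply vidl. Qed.
Lemma vinvK A B (f g : Hom S A B) (x : Cell f g) : vinv (vinv x) = x.
Proof. symmetry. apply vinv_uniq. apply vinvr. Qed.
Lemma hvl A B C (g : Hom S B C) (f1 f2 f3 : Hom S A B) (x : Cell f1 f2) (x' : Cell f2 f3) :
  hcomp (vid g) (vcomp x' x) = vcomp (hcomp (vid g) x') (hcomp (vid g) x).
Proof. rewrite <- hv, vidl. reflexivity. Qed.
Lemma hvr A B C (g1 g2 g3 : Hom S B C) (f : Hom S A B) (y : Cell g1 g2) (y' : Cell g2 g3) :
  hcomp (vcomp y' y) (vid f) = vcomp (hcomp y' (vid f)) (hcomp y (vid f)).
Proof. rewrite <- hv, vidl. reflexivity. Qed.
Lemma xch1 A B C (g g' : Hom S B C) (f f' : Hom S A B) (y : Cell g g') (x : Cell f f') :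
  hcomp y x = vcomp (hcomp y (vid f')) (hcomp (vid g) x).
Proof. rewrite <- hv, vidl, vidr. reflexivity. Qed.
Lemma xch2 A B C (g g' : Hom S B C) (f f' : Hom S A B) (y : Cell g g') (x : Cell f f') :
  hcomp y x = vcomp (hcomp (vid g') x) (hcomp y (vid f)).
Proof. rewrite <- hv, vidl, vidr. reflexivity. Qed.
Lemma hinv A B C (g g' : Hom S B C) (f f' : Hom S A B) (y : Cell g g') (x : Cell f f') :
  hcomp (vinv y) (vinv x) = vinv (hcomp y x).
Proof. apply vinv_uniq. rewrite <- hv, !vinvl, hid. reflexivity. Qed.
Lemma ch A B (f g h k : Hom S A B) (a : Cell g k) (b : Cell f g) (c : Cell h k) (d : Cell f h) :
  vcomp a b = vcomp c d -> forall (k' : Hom S A B) (z : Cell k' f), vcomp a (vcomp b z) = vcomp c (vcomp d z).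
Proof. intros E k' z. rewrite !vA, E. reflexivity. Qed.
Lemma vinvl_ch A B (f g h : Hom S A B) (x : Cell f g) (z : Cell h f) :
  vcomp (vinv x) (vcomp x z) = z.
Proof. rewrite vA, vinvl, vidl. reflexivity. Qed.
Lemma vinvr_ch A B (f g h : Hom S A B) (x : Cell f g) (z : Cell h g) :
  vcomp x (vcomp (vinv x) z) = z.
Proof. rewrite vA, vinvr, vidl. reflexivity. Qed.
Lemma hinvl_ch A B C (g : Hom S B C) (f1 f2 : Hom S A B) h (x : Cell f1 f2) (z : Cell h (comp g f1)) :
  vcomp (hcomp (vid g) (vinv x)) (vcomp (hcomp (vid g) x) z) = z.
Proof. rewrite vA, <- hvl, vinvl, hid, vidl. reflexivity. Qed.
Lemma hinvr_ch A B C (g : Hom S B C) (f1 f2 : Hom S A B) h (x : Cell f1 f2) (z : Cell h (comp g f2)) :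
  vcomp (hcomp (vid g) x) (vcomp (hcomp (vid g) (vinv x)) z) = z.
Proof. rewrite vA, <- hvl, vinvr, hid, vidl. reflexivity. Qed.
Lemma l_faith B D (p q : Hom S B D) (u v : Cell p q) :
  hcomp (vid (one D)) u = hcomp (vid (one D)) v -> u = v.
Proof. intro E. apply (cancel_r (x := lun p)). rewrite <- !lnat, E. reflexivity. Qed.

Lemma kelly B C D (f : Hom S C D) (s : Hom S B C) :
  vcomp (lun (comp f s)) (assoc (one D) f s) = hcomp (lun f) (vid s).
Proof.
  apply l_faith.
  apply (cancel_r (x := vcomp (assoc (one D) (comp (one D) f) s) (hcomp (assoc (one D) (one D) f) (vid s)))).
  rewrite hvl, <- vA, <- pent, vA, tri.
  rewrite <- hid, <- anat, <- tri, hvr.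
  symmetry. rewrite vA, <- anat, <- vA. reflexivity.
Qed.

Lemma zzs A B C (f : Hom S B C) (s : Hom S A B) :
  vcomp (hcomp (vid f) (lun s))
   (vcomp (hcomp (vid f) (hcomp (ev f) (vid s)))
    (vcomp (hcomp (vid f) (vinv (assoc (inv1 f) f s)))
     (vcomp (assoc f (inv1 f) (comp f s)) (hcomp (coev f) (vid (comp f s))))))
  = lun (comp f s).
Proof.
  apply (cancel_r (x := assoc (one C) f s)).
  rewrite kelly, <- (zz f), !hvr.
  rewrite <- !vA, <- hid, <- anat.
  rewrite (vA _ (assoc (comp f (inv1 f)) f s)), pent.
  rewrite <- !vA, hinvl_ch, (vA _ (assoc f (comp (inv1 f) f) s)), <- anat.
  rewrite <- (tri f s). rewrite <- !vA. reflexivity.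
Qed.

Lemma rnat A B (f f' : Hom S A B) (x : Cell f f') :
      vcomp (run f') (hcomp x (vid (one A))) = vcomp x (run f).
Proof. dHS; apply H12. Qed.
Definition Letter (B C : Ob S) : Type := (Hom S B C + Hom S C B)%type.
Definition Jl {B C} (l : Letter B C) : Hom S B C :=
  match l with inl h => h | inr h => inv1 h end.
Definition flip {B C} (l : Letter B C) : Letter C B :=
  match l with inl h => inr h | inr h => inl h end.
Lemma flip_flip B C (l : Letter B C) : flip (flip l) = l.
Proof. destruct l; reflexivity. Qed.

Variable X : Ob S.
Inductive Path : Ob S -> Type :=
 | pnil : Path X
 | pcons : forall A B, Letter A B -> Path A -> Path B.

Fixpoint JP {B} (t : Path B) : Hom S X B :=
  match t with pnil => one X | pcons l t => comp (Jl l) (JP t) end.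

Definition invP {A B C} (l : Letter B C) (l' : Letter A B) : Prop :=
  exists e : A = C, eq_rect A (Letter B) (flip l') C e = l.
Definition cdec {A B C} (l : Letter B C) (l' : Letter A B) :
  {e : A = C | eq_rect A (Letter B) (flip l') C e = l} + {~ invP l l'}.
Proof. destruct (excluded_middle_informative (invP l l')) as [p|n].
 left. exact (constructive_indefinite_description _ p). right; exact n. Defined.

Definition cons_red {B C} (l : Letter B C) (t : Path B) : Path C :=
  match t in Path B0 return Letter B0 C -> Path C with
  | pnil => fun l => pcons l pnil
  | @pcons A B0 l' t' => fun l =>
      match cdec l l' with
      | inleft (exist _ e _) => eq_rect A Path t' C e
      | inright _ => pcons l (pcons l' t')
      end
  end l.

Definition epsL {A B} (l' : Letter A B) : Cell (comp (Jl (flip l')) (Jl l')) (one A) :=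
 match l' with inl h => ev h | inr h => vinv (coev h) end.

Definition kap {B C} (l : Letter B C) (t : Path B) :
  Cell (comp (Jl l) (JP t)) (JP (cons_red l t)).
Proof. revert l. destruct t as [|A B0 l' t']; intro l; simpl. exact (vid _).
  destruct (cdec l l') as [[e He]|n].
  - destruct e. simpl in He. subst l.
    exact (vcomp (lun _) (vcomp (hcomp (epsL l') (vid _)) (vinv (assoc _ _ _)))).
  - exact (vid _).
Defined.

Fixpoint reduced {B} (t : Path B) : Prop :=
  match t with pnil => True | pcons l t' => reduced t' /\ cons_red l t' = pcons l t' end.

Lemma self_cancel B C (l : Letter B C) (t : Path B) : cons_red (flip l) (pcons l t) = t.
Proof. simpl. destruct (cdec (flip l) l) as [[e He]|n].
 - rewrite <- (eq_rect_eq _ _ _ _ e). reflexivity.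
 - exfalso; apply n. exists eq_refl. reflexivity.
Qed.

Lemma red_cons B C (l : Letter B C) (t : Path B) : reduced t -> reduced (cons_red l t).
Proof. revert l. destruct t as [|A B0 l' t']; intros l r; simpl.
 - split; auto.
 - destruct (cdec l l') as [[e He]|n].
   + destruct e. simpl. apply r.
   + simpl. split; [exact r|]. simpl. destruct (cdec l l') as [[e He]|n'].
     * exfalso. apply n. exists e. exact He.
     * reflexivity.
Qed.

Lemma cancel_back B C (l : Letter B C) (t : Path B) : reduced t -> cons_red (flip l) (cons_red l t) = t.
Proof. revert l. destruct t as [|A B0 l' t']; intros l r.
 - apply self_cancel.
 - simpl cons_red at 2. destruct (cdec l l') as [[e He]|n].
   + destruct e. simpl in He. subst l. rewrite flip_flip. simpl in r. destruct r as [_ r]. exact r.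
   + apply self_cancel.
Qed.

Fixpoint act {A B} (w : FHom S A B) : Path A -> Path B :=
 match w with
 | Fgen h => @cons_red _ _ (inl h)
 | Fone _ => fun t => t
 | Fcomp g f => fun t => act g (act f t)
 | Finv f => actinv f
 end
with actinv {A B} (w : FHom S A B) : Path B -> Path A :=
 match w with
 | Fgen h => @cons_red _ _ (inr h)
 | Fone _ => fun t => t
 | Fcomp g f => fun t => actinv f (actinv g t)
 | Finv f => act f
 end.

Lemma act_red_both A B (w : FHom S A B) :
  (forall t, reduced t -> reduced (act w t)) /\ (forall t, reduced t -> reduced (actinv w t)).
Proof. induction w as [A B h|A|A B C g IHg f IHf|A B f IHf]; simpl; split; intros t r.
 - apply red_cons; exact r.
 - apply red_cons; exact r.
 - exact r.
 - exact r.
 - apply IHg, IHf, r.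
 - apply IHf, IHg, r.
 - apply IHf, r.
 - apply IHf, r.
Qed.
Lemma act_red A B (w : FHom S A B) t : reduced t -> reduced (act w t).
Proof. apply act_red_both. Qed.
Lemma actinv_red A B (w : FHom S A B) t : reduced t -> reduced (actinv w t).
Proof. apply act_red_both. Qed.

Lemma act_inv_both A B (w : FHom S A B) :
  (forall t, reduced t -> act w (actinv w t) = t) /\ (forall t, reduced t -> actinv w (act w t) = t).
Proof. induction w as [A B h|A|A B C g IHg f IHf|A B f IHf]; simpl; split; intros t r.
 - exact (cancel_back (inr h) r).
 - exact (cancel_back (inl h) r).
 - reflexivity.
 - reflexivity.
 - rewrite (proj1 IHf). apply IHg, r. apply actinv_red, r.
 - rewrite (proj2 IHg). apply IHf, r. apply act_red, r.
 - apply IHf, r.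
 - apply IHf, r.
Qed.
Lemma act_actinv A B (w : FHom S A B) t : reduced t -> act w (actinv w t) = t.
Proof. apply act_inv_both. Qed.
Lemma actinv_act A B (w : FHom S A B) t : reduced t -> actinv w (act w t) = t.
Proof. apply act_inv_both. Qed.

Definition tr {B} {p q : Path B} (e : p = q) : Cell (JP p) (JP q) :=
  match e with eq_refl => vid _ end.

Fixpoint psi {A B} (w : FHom S A B) : forall (t : Path A), reduced t ->
   Cell (comp (J1 w) (JP t)) (JP (act w t)) :=
 match w in FHom _ A B return forall (t : Path A), reduced t ->
   Cell (comp (J1 w) (JP t)) (JP (act w t)) with
 | Fgen h => fun t _ => kap (inl h) t
 | Fone _ => fun t _ => lun (JP t)
 | Fcomp g f => fun t r =>
     vcomp (@psi _ _ g (act f t) (act_red f r))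
       (vcomp (hcomp (vid (J1 g)) (@psi _ _ f t r)) (assoc _ _ _))
 | Finv f => fun t r =>
     vcomp (lun (JP (actinv f t)))
      (vcomp (hcomp (ev (J1 f)) (vid _))
       (vcomp (vinv (assoc _ _ _))
        (vcomp (hcomp (vid (inv1 (J1 f))) (vinv (@psi _ _ f (actinv f t) (actinv_red f r))))
           (hcomp (vid _) (tr (eq_sym (act_actinv f r)))))))
 end.

Arguments psi [A B] w t r.


Lemma tr_pi B (p q : Path B) (e1 e2 : p = q) : tr e1 = tr e2.
Proof. rewrite (proof_irrelevance _ e1 e2). reflexivity. Qed.
Lemma tr_trans B (p q u : Path B) (e1 : p = q) (e2 : q = u) :
  vcomp (tr e2) (tr e1) = tr (eq_trans e1 e2).
Proof. destruct e2, e1. simpl. apply vidl. Qed.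
Lemma tr_id B (p : Path B) (e : p = p) : tr e = vid (JP p).
Proof. rewrite (tr_pi e eq_refl). reflexivity. Qed.
Lemma tr_trans_ch B (p q u : Path B) (e1 : p = q) (e2 : q = u) h (z : Cell h (JP p)) :
  vcomp (tr e2) (vcomp (tr e1) z) = vcomp (tr (eq_trans e1 e2)) z.
Proof. rewrite vA, tr_trans. reflexivity. Qed.

Lemma tr_sym B (p q : Path B) (e : p = q) : vinv (tr e) = tr (eq_sym e).
Proof. destruct e. simpl. apply vinv_vid. Qed.
Lemma psi_pi A B (w : FHom S A B) t (r1 r2 : reduced t) : psi w t r1 = psi w t r2.
Proof. rewrite (proof_irrelevance _ r1 r2). reflexivity. Qed.

Lemma psi_t A B (w : FHom S A B) t1 t2 (e : t1 = t2) r1 r2 :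
  vcomp (psi w t2 r2) (hcomp (vid (J1 w)) (tr e)) = vcomp (tr (f_equal (act w) e)) (psi w t1 r1).
Proof. destruct e. simpl. rewrite hid, vidr, vidl. apply psi_pi. Qed.

Lemma swap1 A B C (g g' : Hom S B C) (f f' f'' : Hom S A B) (y : Cell g g') (q : Cell f f') (p : Cell f' f'')
  h (z : Cell h (comp g f)) :
  vcomp (hcomp (vid g') p) (vcomp (hcomp y q) z) = vcomp (hcomp y (vid f'')) (vcomp (hcomp (vid g) (vcomp p q)) z).
Proof. rewrite !vA, <- !hv, !vidl, !vidr. reflexivity. Qed.
Lemma swap2 A B C (g g' : Hom S B C) (f f' : Hom S A B) (y : Cell g g') (p : Cell f f')
  h (z : Cell h (comp g f)) :
  vcomp (hcomp y (vid f')) (vcomp (hcomp (vid g) p) z) = vcomp (hcomp (vid g') p) (vcomp (hcomp y (vid f)) z).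
Proof. rewrite !vA, <- !hv, !vidl, !vidr. reflexivity. Qed.

Lemma swap3 A B C (g g' : Hom S B C) (f f' : Hom S A B) (y : Cell g g') (p : Cell f f')
  h (z : Cell h (comp g f)) :
  vcomp (hcomp (vid g') p) (vcomp (hcomp y (vid f)) z) = vcomp (hcomp y p) z.
Proof. rewrite vA, <- hv, vidl, vidr. reflexivity. Qed.
Lemma zzs_ch A B C (f : Hom S B C) (s : Hom S A B) k (z : Cell k (comp (one C) (comp f s))) :
  vcomp (hcomp (vid f) (lun s))
   (vcomp (hcomp (vid f) (hcomp (ev f) (vid s)))
    (vcomp (hcomp (vid f) (vinv (assoc (inv1 f) f s)))
     (vcomp (assoc f (inv1 f) (comp f s)) (vcomp (hcomp (coev f) (vid (comp f s))) z))))
  = vcomp (lun (comp f s)) z.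
Proof. rewrite <- (zzs f s), <- !vA. reflexivity. Qed.
Lemma swap4 A B C (g g' : Hom S B C) (f f' : Hom S A B) (y : Cell g g') (p : Cell f f') :
  vcomp (hcomp (vid g') p) (hcomp y (vid f)) = vcomp (hcomp y (vid f')) (hcomp (vid g) p).
Proof. rewrite <- !hv, !vidl, !vidr. reflexivity. Qed.
Lemma swap4_ch A B C (g g' : Hom S B C) (f f' : Hom S A B) (y : Cell g g') (p : Cell f f')
  h (z : Cell h (comp g f)) :
  vcomp (hcomp (vid g') p) (vcomp (hcomp y (vid f)) z) = vcomp (hcomp y (vid f')) (vcomp (hcomp (vid g) p) z).
Proof. rewrite !vA, swap4. reflexivity. Qed.
Lemma CH A B (f : FHom S A B) t r s rs (e : act f s = t) (q : s = actinv f t) :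
  vcomp (psi (Finv f) t r)
    (vcomp (hcomp (vid (inv1 (J1 f))) (vcomp (tr e) (psi f s rs))) (assoc _ _ _))
  = vcomp (tr q) (vcomp (lun (JP s)) (hcomp (ev (J1 f)) (vid (JP s)))).
Proof.
  subst s. simpl. rewrite (psi_pi f rs (actinv_red f r)).
  rewrite (tr_pi e (act_actinv f r)).
  rewrite hvl, <- !vA, <- tr_sym, hinvl_ch, hinvl_ch, vinvl, vidr, vidl. reflexivity.
Qed.

Lemma CH_ch A B (f : FHom S A B) t r s rs (e : act f s = t) (q : s = actinv f t) h
  (z : Cell h (comp (comp (inv1 (J1 f)) (J1 f)) (JP s))) :
  vcomp (psi (Finv f) t r)
    (vcomp (hcomp (vid (inv1 (J1 f))) (vcomp (tr e) (psi f s rs))) (vcomp (assoc _ _ _) z))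
  = vcomp (tr q) (vcomp (lun (JP s)) (vcomp (hcomp (ev (J1 f)) (vid (JP s))) z)).
Proof. rewrite (vA z (assoc _ _ _)), vA.
  transitivity (vcomp (vcomp (tr q) (vcomp (lun (JP s)) (hcomp (ev (J1 f)) (vid (JP s))))) z).
  f_equal. apply CH. rewrite <- !vA. reflexivity. Qed.

Lemma main A B (f g : FHom S A B) (x : FCell f g) :
  forall t (r : reduced t), exists E : act f t = act g t,
    vcomp (psi g t r) (hcomp (J2 x) (vid (JP t))) = vcomp (tr E) (psi f t r).
Proof.
  induction x; intros t r.
  - exists eq_refl. simpl. rewrite hid, vidr, vidl. reflexivity.
  -
    destruct (IHx2 t r) as [E1 H1]. destruct (IHx1 t r) as [E2 H2].
    exists (eq_trans E1 E2). simpl J2. rewrite hvr, vA, H2, <- vA, H1, tr_trans_ch. reflexivity.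
  -
    destruct (IHx t r) as [E1 H1]. exists (eq_sym E1).
    apply (cancel_r (x := hcomp (J2 x) (vid (JP t)))). simpl J2.
    rewrite <- vA, <- hvr, vinvl, hid, vidr.
    rewrite <- vA, H1, tr_trans_ch, tr_id, vidl. reflexivity.
  -
    simpl. destruct (IHx2 t r) as [Ex Hx]. destruct (IHx1 (act f t) (act_red f r)) as [Ey Hy].
    exists (eq_trans Ey (f_equal (act g') Ex)).
    rewrite <- !vA, anat, swap1, Hx, hvl, <- !vA, swap2.
    rewrite (vA _ (hcomp (vid (J1 g')) (tr Ex))), (psi_t g' Ex (act_red f r)).
    rewrite <- vA, (vA _ (hcomp (J2 x1) (vid _))), Hy, <- vA, tr_trans_ch. reflexivity.
  -
    simpl act. set (s := actinv f t). pose proof (actinv_red f r) as rs. fold s in rs.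
    pose proof (act_actinv f r) as e0. fold s in e0.
    destruct (IHx s rs) as [Es Hs].
    assert (E : actinv f' t = s).
    { transitivity (actinv f' (act f' s)). f_equal. rewrite <- Es. symmetry. exact e0.
      apply actinv_act. exact rs. }
    exists (eq_sym E).
    assert (Hs' : psi f s rs = vcomp (tr (eq_sym Es)) (vcomp (psi f' s rs) (hcomp (J2 x) (vid _)))).
    { rewrite Hs, tr_trans_ch, tr_id, vidl. reflexivity. }
    apply (cancel_r (x := vcomp (hcomp (vid (inv1 (J1 f))) (vcomp (tr e0) (psi f s rs))) (assoc _ _ _))).
    pose proof (CH (f:=f) r rs e0 eq_refl) as K. cbn [J1 act J2] in K |- *. fold s in K.
    symmetry. rewrite <- vA, K. symmetry. rewrite <- !vA, swap2, Hs', tr_trans_ch.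
    rewrite (vA (hcomp (J2 x) (vid _))), (hvl _ (hcomp (J2 x) (vid (JP s)))), <- !vA, swap3, <- anat.
    pose proof (CH_ch (f:=f') r rs (eq_trans (eq_sym Es) e0) (eq_sym E) (hcomp (hcomp (inv2 (J2 x)) (J2 x)) (vid (JP s)))) as K'.
    cbn [J1 act J2] in K'. fold s in K'. rewrite K'.
    rewrite <- hvr, evnat, vidl, tr_trans_ch. f_equal. apply tr_pi.
  -
    exists eq_refl. simpl. rewrite vidl.
    rewrite (psi_pi h (t:=act g (act f t)) (act_red (Fcomp g f) r) (act_red g (act_red f r))).
    rewrite !hvl, <- !vA, <- pent.
    rewrite (vA (assoc _ _ _) (assoc _ _ _) (hcomp (vid _) (hcomp (vid _) _))), <- anat, hid, <- !vA.
    reflexivity.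
  -
    exists eq_refl. simpl. rewrite vidl.
    rewrite vA, lnat, <- vA, kelly. reflexivity.
  -
    exists eq_refl. simpl. rewrite vidl.
    rewrite tri, (psi_pi f (t:=t) (act_red (Fone A) r) r). reflexivity.
  -
    simpl act. exists (actinv_act f r).
    change (psi (Fcomp (Finv f) f) t r) with (vcomp (psi (Finv f) (act f t) (act_red f r)) (vcomp (hcomp (vid (J1 (Finv f))) (psi f t r)) (assoc (J1 (Finv f)) (J1 f) (JP t)))).
    change (psi (Fone A) t r) with (lun (JP t)).
    pose proof (CH (f:=f) (act_red f r) r eq_refl (eq_sym (actinv_act f r))) as K.
    simpl tr in K. rewrite vidl in K. cbn [J1 act J2] in K |- *. rewrite K.
    rewrite tr_trans_ch, tr_id, vidl. reflexivity.
  -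
    simpl act. exists (eq_sym (act_actinv f r)). simpl.
    rewrite (psi_pi f (t:=actinv f t) (act_red (Finv f) r) (actinv_red f r)).
    rewrite !hvl, <- !vA.
    rewrite (vA _ (assoc _ _ _) (hcomp (vid _) (hcomp (vid _) (tr _)))), <- anat, hid, <- !vA.
    rewrite (vA _ (assoc _ _ _) (hcomp (vid _) (hcomp (vid _) (vinv _)))), <- anat, hid, <- !vA.
    rewrite swap4, swap4_ch, zzs_ch.
    rewrite (vA _ (hcomp (vid (one B)) (vinv _))), lnat, <- vA, vinvr_ch, lnat. reflexivity.
Qed.

Lemma r_faith A B (p q : Hom S A B) (u v : Cell p q) :
  hcomp u (vid (one A)) = hcomp v (vid (one A)) -> u = v.
Proof. intro E. apply (cancel_r (x := run p)). rewrite <- !rnat, E. reflexivity. Qed.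

End Coh.

Theorem theoremB11 :
  forall (S : BigSig), is_bigroupoid S ->
  forall (A B : Ob S) (f g : FHom S A B) (x y : FCell f g),
    J2 x = J2 y.
Proof.
  intros S HS A B f g x y.
  destruct (main HS x (t:=@pnil S A) I) as [Ex Hx].
  destruct (main HS y (t:=@pnil S A) I) as [Ey Hy].
  apply (r_faith HS). apply (cancel_l HS (x := psi g (t:=@pnil S A) I)).
  refine (eq_trans Hx (eq_trans _ (eq_sym Hy))). rewrite (tr_pi Ex Ey). reflexivity.
Qed.
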